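(* For all $i,j\in I$, \[ \langle\!\langle \mathrm{Twirl}_i,\mathrm{Twirl}_j\rangle\!\rangle=|\mathcal E_i|\,\delta_{ij}. \] Consequently $\{|\mathcal E_i|^{-1/2}\,\mathrm{Twirl}_i\}_{i\in I}$ is an orthonormal set in $\mathcal L(\mathcal L(V))$.
   Context: Let $V$ be a finite-dimensional complex Hilbert space and $\mathcal L(V)$ the space of linear operators on $V$, equipped with the Hilbert–Schmidt inner product $\langle X_1,X_2\rangle=\mathrm{Tr}(X_1^\dagger X_2)$ (conjugate-linear in the first argument). Linear maps $\mathcal L(V)\to\mathcal L(V)$ are called superoperators; the space $\mathcal L(\mathcal L(V))$ of superoperators carries the inner product $\langle\!\langle \mathcal S,\mathcal T\rangle\!\rangle=\mathrm{Tr}(\mathcal S^\dagger\mathcal T)=\sum_{Y\in\mathcal B}\langle \mathcal S(Y),\mathcal T(Y)\rangle$, where $\mathcal B$ is any orthonormal basis of $\mathcal L(V)$ (adjoint and trace taken with respect to the Hilbert–Schmidt inner product). Fix an orthogonal decomposition $\mathcal L(V)=\bigoplus_{i\in I}\mathcal E_i$ and write $|\mathcal E_i|=\dim\mathcal E_i$. For each $i$, fix an orthonormal basis $\mathcal B_i$ of $\mathcal E_i$ and define the twirling superoperator $\mathrm{Twirl}_i(X)=\sum_{E\in\mathcal B_i}E^\dagger XE$ (it does not depend on the choice of orthonormal basis $\mathcal B_i$). *)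

(* Defs.v *)
From HB Require Import structures.
From mathcomp Require Import all_boot all_order all_algebra.
Set Implicit Arguments.
Unset Strict Implicit.
Unset Printing Implicit Defensive.
Import Order.TTheory GRing.Theory Num.Theory.
Local Open Scope ring_scope.

(* V = C^n (after fixing an orthonormal basis), so L(V) = 'M[C]_n.
   C is an arbitrary numClosedFieldType (e.g. the complex numbers). *)

Definition adjmx (C : numClosedFieldType) (n : nat) (A : 'M[C]_n) : 'M[C]_n :=
  (map_mx (fun x => x^*) A)^T.

Definition hs (C : numClosedFieldType) (n : nat) (X1 X2 : 'M[C]_n) : C :=
  \tr (adjmx X1 *m X2).

Definition superop (C : numClosedFieldType) (n : nat) := 'M[C]_n -> 'M[C]_n.

(* <<S, T>> = sum over an orthonormal basis of L(V) of <S Y, T Y>;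
   we use the standard orthonormal basis of matrix units delta_mx a b. *)
Definition sip (C : numClosedFieldType) (n : nat) (S T : superop C n) : C :=
  \sum_(a < n) \sum_(b < n) hs (S (delta_mx a b)) (T (delta_mx a b)).

Definition hs_orthonormal (C : numClosedFieldType) (n : nat) (s : seq 'M[C]_n) :=
  forall k l : 'I_(size s), hs s`_k s`_l = (k == l)%:R.

Definition twirl (C : numClosedFieldType) (n : nat) (B : seq 'M[C]_n) : superop C n :=
  fun X => \sum_(E <- B) adjmx E *m X *m E.

Definition sscale (C : numClosedFieldType) (n : nat) (c : C) (S : superop C n)
  : superop C n := fun X => c *: S X.

(* Main.v *)
Require Import Defs.
From HB Require Import structures.
From mathcomp Require Import all_boot all_order all_algebra.
From mathcomp Require Import ring.
Import Order.TTheory GRing.Theory Num.Theory.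
Local Open Scope ring_scope.

Section Aux.
Variables (C : numClosedFieldType) (n : nat).
Implicit Types X Y E F : 'M[C]_n.

Lemma hsE X Y : hs X Y = \sum_(r < n) \sum_(c < n) (X r c)^* * Y r c.
Proof.
rewrite /hs /mxtrace exchange_big /=; apply: eq_bigr => c _.
by rewrite mxE; apply: eq_bigr => r _; rewrite /adjmx !mxE.
Qed.

Lemma hsDl X1 X2 Y : hs (X1 + X2) Y = hs X1 Y + hs X2 Y.
Proof.
rewrite !hsE -big_split /=; apply: eq_bigr => r _.
rewrite -big_split /=; apply: eq_bigr => c _.
by rewrite mxE rmorphD mulrDl.
Qed.

Lemma hsDr X Y1 Y2 : hs X (Y1 + Y2) = hs X Y1 + hs X Y2.
Proof.
rewrite !hsE -big_split /=; apply: eq_bigr => r _.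
rewrite -big_split /=; apply: eq_bigr => c _.
by rewrite mxE mulrDr.
Qed.

Lemma hs0l Y : hs 0 Y = 0.
Proof. by rewrite hsE big1 // => r _; rewrite big1 // => c _; rewrite mxE rmorph0 mul0r. Qed.

Lemma hs0r X : hs X 0 = 0.
Proof. by rewrite hsE big1 // => r _; rewrite big1 // => c _; rewrite mxE mulr0. Qed.

Lemma hsZ a b X Y : hs (a *: X) (b *: Y) = a^* * b * hs X Y.
Proof.
rewrite !hsE mulr_sumr; apply: eq_bigr => r _.
rewrite mulr_sumr; apply: eq_bigr => c _.
rewrite !mxE rmorphM; ring.
Qed.

Lemma tw_entry E a b r c :
  (adjmx E *m delta_mx a b *m E) r c = (E a r)^* * E b c.
Proof.
rewrite mxE (bigD1 b) //= big1 ?addr0.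
  rewrite mxE (bigD1 a) //= big1 ?addr0.
    by rewrite /adjmx !mxE !eqxx mulr1.
  by move=> x /negbTE xa; rewrite !mxE xa mulr0.
move=> x /negbTE xb; rewrite mxE big1 ?mul0r // => y _.
by rewrite !mxE xb andbF mulr0.
Qed.

Lemma key E F :
  \sum_(a < n) \sum_(b < n)
     hs (adjmx E *m delta_mx a b *m E) (adjmx F *m delta_mx a b *m F)
  = hs F E * hs E F.
Proof.
rewrite [hs F E]hsE mulr_suml; apply: eq_bigr => a _.
under eq_bigr do rewrite hsE.
rewrite exchange_big /= mulr_suml; apply: eq_bigr => r _.
rewrite hsE mulr_sumr; apply: eq_bigr => b _.
rewrite mulr_sumr; apply: eq_bigr => c _.
rewrite !tw_entry (rmorphM Num.conj_op) /= conjCK; ring.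
Qed.

Lemma hs_suml (s : seq 'M[C]_n) (f : 'M[C]_n -> 'M[C]_n) Y :
  hs (\sum_(x <- s) f x) Y = \sum_(x <- s) hs (f x) Y.
Proof.
by apply: (big_morph (fun X => hs X Y)) => [X1 X2|]; rewrite ?hsDl ?hs0l.
Qed.

Lemma hs_sumr (s : seq 'M[C]_n) (f : 'M[C]_n -> 'M[C]_n) X :
  hs X (\sum_(x <- s) f x) = \sum_(x <- s) hs X (f x).
Proof.
by apply: (big_morph (fun Y => hs X Y)) => [X1 X2|]; rewrite ?hsDr ?hs0r.
Qed.

Lemma sip_twirl (s t : seq 'M[C]_n) :
  sip (twirl s) (twirl t) = \sum_(E <- s) \sum_(F <- t) hs F E * hs E F.
Proof.
have H : forall a b : 'I_n, hs (twirl s (delta_mx a b)) (twirl t (delta_mx a b)) =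
    \sum_(E <- s) \sum_(F <- t)
      hs (adjmx E *m delta_mx a b *m E) (adjmx F *m delta_mx a b *m F).
  by move=> a b; rewrite /twirl hs_suml; apply: eq_bigr => E _; rewrite hs_sumr.
rewrite /sip.
under eq_bigr do under eq_bigr do rewrite H.
under eq_bigr => a _ do rewrite exchange_big.
rewrite exchange_big; apply: eq_bigr => E _.
under eq_bigr => a _ do rewrite exchange_big.
rewrite exchange_big; apply: eq_bigr => F _.
exact: key.
Qed.


Lemma sip_scale (c d : C) (S T : superop C n) :
  sip (sscale c S) (sscale d T) = c^* * d * sip S T.
Proof.
rewrite /sip /sscale mulr_sumr; apply: eq_bigr => a _.
rewrite mulr_sumr; apply: eq_bigr => b _; exact: hsZ.
Qed.

End Aux.

Theorem mainTheorem1 (C : numClosedFieldType) (n : nat) (I : finType)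
    (E : I -> {vspace 'M[C]_n}) (B : I -> seq 'M[C]_n)
    (Horth : forall i j, i != j -> forall x y, x \in E i -> y \in E j -> hs x y = 0)
    (Hfull : (\sum_(i : I) E i)%VS = fullv)
    (Hbasis : forall i, basis_of (E i) (B i))
    (Hon : forall i, hs_orthonormal (B i)) :
  (forall i j, sip (twirl (B i)) (twirl (B j)) = (\dim (E i))%:R * (i == j)%:R) /\
  (forall i j, i != j ->
     sip (sscale (sqrtC (\dim (E i))%:R)^-1 (twirl (B i)))
         (sscale (sqrtC (\dim (E j))%:R)^-1 (twirl (B j))) = 0) /\
  (forall i, (0 < \dim (E i))%N ->
     sip (sscale (sqrtC (\dim (E i))%:R)^-1 (twirl (B i)))
         (sscale (sqrtC (\dim (E i))%:R)^-1 (twirl (B i))) = 1).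
Proof.
have P1 : forall i j, sip (twirl (B i)) (twirl (B j)) = (\dim (E i))%:R * (i == j)%:R.
  move=> i j; rewrite sip_twirl.
  have [<-|ij] := eqVneq i j; last first.
    rewrite mulr0 big1_seq // => x /andP[_ xB]; rewrite big1_seq // => y /andP[_ yB].
    by rewrite (Horth i j ij x y) ?mulr0 //; apply: (basis_mem (Hbasis _)).
  rewrite mulr1 (size_basis (X := in_tuple (B i))) ?(Hbasis i) //=.
  rewrite (big_nth 0) big_mkord -[in RHS](card_ord (size (B i))) -sumr_const.
  apply: eq_bigr => k _; rewrite (big_nth 0) big_mkord (bigD1 k) //= big1 ?addr0.
    by rewrite !Hon eqxx mulr1.
  by move=> l /negbTE lk; rewrite Hon lk mul0r.
split=> [//|]; split=> [i j ij|i di].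
  by rewrite sip_scale P1 (negbTE ij) !mulr0.
have cR : ((sqrtC (\dim (E i))%:R)^-1)^* = (sqrtC (\dim (E i))%:R)^-1 :> C.
  by rewrite geC0_conj // invr_ge0 sqrtC_ge0 ler0n.
have d0 : (\dim (E i))%:R != 0 :> C by rewrite pnatr_eq0 -lt0n.
rewrite sip_scale P1 eqxx mulr1 cR -invrM ?unitfE ?sqrtC_eq0 // -expr2 sqrtCK.
by rewrite mulVf.
Qed.
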